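(* Consider a Fisher market with $n$ buyers and $m$ items, each item having supply $1$. Buyer $i$ has budget $B_i\ge 0$, valuations $v_{ij}\ge 0$, and a hard demand $d_i\ge 0$; for a bundle $x_i\in\mathbb{R}^m_{\ge 0}$ let $u_i(x_i)=\sum_j v_{ij}x_{ij}-d_i$. Assume there exists an allocation $x\ge 0$ with $\sum_i x_{ij}\le 1$ for all $j$ and $u_i(x_i)>0$ for all $i$. Let $x$ be an optimal solution of $$\max_{x\ge 0}\sum_i B_i\log\Big(\sum_j v_{ij}x_{ij}-d_i\Big)\quad\text{s.t.}\quad \sum_i x_{ij}\le 1\ \ \forall j,$$ and let $p=(p_j)\ge 0$ be the optimal dual variables of the supply constraints (satisfying the KKT conditions together with $x$). Define, for each buyer $i$, the demand set with respect to demand-inflated budgets $$D_i(p)=\arg\max_{x_i\ge 0}\Big\{u_i(x_i)\ \Big|\ \sum_j p_j x_{ij}\le B_i\Big(1+\frac{d_i}{u_i(x_i)}\Big)\Big\}.$$ Then $(x,p)$ is a market equilibrium in the following sense: (1) $x_i\in D_i(p)$ for every buyer $i$; and (2) every item $j$ with $p_j>0$ is exactly allocated, i.e. $\sum_i x_{ij}=1$. *)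

(* Defs.v *)
From mathcomp Require Import all_boot all_order all_algebra.
From mathcomp Require Import all_classical all_reals all_analysis.
Set Implicit Arguments. Unset Strict Implicit. Unset Printing Implicit Defensive.
Import Order.TTheory GRing.Theory Num.Theory.
Local Open Scope ring_scope.

Section Fisher.
Variables (R : realType) (n m : nat).
Variables (v : 'I_n -> 'I_m -> R) (d : 'I_n -> R) (B : 'I_n -> R).

Definition util (i : 'I_n) (xi : 'I_m -> R) : R :=
  \sum_(j < m) v i j * xi j - d i.

Definition feasible (x : 'I_n -> 'I_m -> R) : Prop :=
  (forall i j, 0 <= x i j) /\ (forall j, \sum_(i < n) x i j <= 1).

Definition eg_obj (x : 'I_n -> 'I_m -> R) : R :=
  \sum_(i < n) B i * ln (util i (x i)).

Definition eg_optimal (x : 'I_n -> 'I_m -> R) : Prop :=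
  [/\ feasible x, (forall i, 0 < util i (x i)) &
      forall y, feasible y -> (forall i, 0 < util i (y i)) ->
        eg_obj y <= eg_obj x].

(* KKT conditions for x together with the dual prices p of the supply
   constraints: dual feasibility, complementary slackness, stationarity. *)
Definition eg_KKT (x : 'I_n -> 'I_m -> R) (p : 'I_m -> R) : Prop :=
  [/\ (forall j, 0 <= p j),
      (forall j, p j * (1 - \sum_(i < n) x i j) = 0),
      (forall i j, B i * v i j / util i (x i) <= p j) &
      (forall i j, x i j * (p j - B i * v i j / util i (x i)) = 0)].

Definition in_budget (p : 'I_m -> R) (i : 'I_n) (xi : 'I_m -> R) : Prop :=
  \sum_(j < m) p j * xi j <= B i * (1 + d i / util i xi).

(* xi belongs to the demand set D_i(p) (bundles restricted to the
   log-domain u_i > 0, where the inflated budget is meaningful) *)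
Definition in_demand_set (p : 'I_m -> R) (i : 'I_n) (xi : 'I_m -> R) : Prop :=
  [/\ (forall j, 0 <= xi j), 0 < util i xi, in_budget p i xi &
      forall yi : 'I_m -> R, (forall j, 0 <= yi j) -> 0 < util i yi ->
        in_budget p i yi -> util i yi <= util i xi].

End Fisher.

(* Main.v *)
Require Import Defs.
From mathcomp Require Import all_boot all_order all_algebra.
From mathcomp Require Import all_classical all_reals all_analysis.
Import Order.TTheory GRing.Theory Num.Theory.
Local Open Scope ring_scope.

Theorem theorem1 (R : realType) (n m : nat)
    (v : 'I_n -> 'I_m -> R) (d : 'I_n -> R) (B : 'I_n -> R)
    (x : 'I_n -> 'I_m -> R) (p : 'I_m -> R) :
  (forall i, 0 < B i) ->
  (forall i j, 0 <= v i j) ->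
  (forall i, 0 <= d i) ->
  (exists x0, feasible x0 /\ forall i, 0 < util v d i (x0 i)) ->
  eg_optimal v d B x ->
  eg_KKT v d B x p ->
  (forall i, in_demand_set v d B p i (x i)) /\
  (forall j, 0 < p j -> \sum_(i < n) x i j = 1).
Proof.
move=> Bpos vpos dpos _ [[x0 xle] upos _] [p0 cs st ss]; split; last first.
  move=> j pj; have /eqP := cs j.
  by rewrite mulf_eq0 gt_eqF //= subr_eq0 => /eqP <-.
move=> i; set U := util v d i (x i).
have UP : 0 < U := upos i.
have key : \sum_(j < m) p j * x i j = B i * (1 + d i / U).
  transitivity (\sum_(j < m) B i * v i j / U * x i j).
    apply: eq_bigr => j _; have /eqP := ss i j.
    rewrite mulf_eq0 subr_eq0 => /orP[/eqP-> | /eqP ->]; [by rewrite !mulr0 | by []].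
  transitivity (B i / U * \sum_(j < m) v i j * x i j).
    rewrite mulr_sumr; apply: eq_bigr => j _; by rewrite mulrA [B i / U * _]mulrAC.
  rewrite -[X in B i / U * X](subrK (d i)) -/(util v d i (x i)) -/U.
  by rewrite mulrDr divfK ?gt_eqF // mulrDr mulr1 mulrA mulrAC.
split => //; first by rewrite /in_budget key.
move=> y y0 Wp hb; set W := util v d i y in Wp hb *.
set S := W + d i.
have SP : 0 < S by rewrite /S ltr_wpDr.
have h1 : B i / U * S <= B i * (1 + d i / W).
  apply: le_trans hb; rewrite /S /W /util subrK mulr_sumr ler_sum // => j _.
  rewrite mulrA ler_wpM2r // mulrAC; exact: st.
have e1 : B i * (1 + d i / W) = (B i * S) * W^-1.
  by rewrite /S -mulrA mulrDl divff ?gt_eqF.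
have e2 : B i / U * S = (B i * S) * U^-1 by rewrite mulrAC.
move: h1; rewrite e1 e2 ler_pM2l ?mulr_gt0 // lef_pV2 //; by rewrite posrE.
Qed.
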